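(* Let $n\ge1$ be an integer. There exists a constant $C=C(n)>0$ such that for all pairwise distinct points $z_1,z_2,z_3\in\mathbb{R}^2$ and $i=1,2$, $$p_i(z_1,z_2,z_3)\le C\,c(z_1,z_2,z_3)^2.$$
   Context: For $i=1,2$ and $x\in\mathbb{R}^2\setminus\{0\}$, $K_i(x)=x_i^{2n-1}/|x|^{2n}$, and $p_i(z_1,z_2,z_3)=K_i(z_1-z_2)K_i(z_1-z_3)+K_i(z_2-z_1)K_i(z_2-z_3)+K_i(z_3-z_1)K_i(z_3-z_2)$. The Menger curvature $c(z_1,z_2,z_3)$ is the inverse of the radius of the circle through $z_1,z_2,z_3$ (equal to $0$ if the points are collinear). *)

(* Defs.v *)
From Stdlib Require Import Reals ClassicalEpsilon.
Open Scope R_scope.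

Definition pt := (R * R)%type.

Definition psub (x y : pt) : pt := (fst x - fst y, snd x - snd y).

(* i-th coordinate, i = 1 or 2 (any i <> 1 gives the second coordinate;
   the theorem only uses i = 1, 2). *)
Definition coord (i : nat) (x : pt) : R := if Nat.eqb i 1 then fst x else snd x.

Definition nrm2 (x : pt) : R := fst x ^ 2 + snd x ^ 2.
Definition dist2 (x y : pt) : R := sqrt (nrm2 (psub x y)).

Definition K (n i : nat) (x : pt) : R := coord i x ^ (2 * n - 1) / (nrm2 x) ^ n.

Definition p (n i : nat) (z1 z2 z3 : pt) : R :=
  K n i (psub z1 z2) * K n i (psub z1 z3)
  + K n i (psub z2 z1) * K n i (psub z2 z3)
  + K n i (psub z3 z1) * K n i (psub z3 z2).

Definition collinear (z1 z2 z3 : pt) : Prop :=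
  (fst z2 - fst z1) * (snd z3 - snd z1) - (snd z2 - snd z1) * (fst z3 - fst z1) = 0.

Definition is_circumradius (z1 z2 z3 : pt) (r : R) : Prop :=
  0 < r /\ exists w : pt, dist2 z1 w = r /\ dist2 z2 w = r /\ dist2 z3 w = r.

Definition circumradius (z1 z2 z3 : pt) : R :=
  epsilon (inhabits 0) (is_circumradius z1 z2 z3).

Definition menger (z1 z2 z3 : pt) : R :=
  match excluded_middle_informative (collinear z1 z2 z3) with
  | left _ => 0
  | right _ => / circumradius z1 z2 z3
  end.

(* Main.v *)
Require Import Defs.
From Stdlib Require Import Reals Lra Lia Psatz ClassicalEpsilon.
Open Scope R_scope.

Fixpoint rho (n : nat) (t : R) : R :=
  match n with O => 1 | S k => (1 + t^2) * rho k t end.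
Fixpoint D1 (n : nat) (y z : R) : R :=
  match n with O => 0 | S k => rho k z * (z + y) + D1 k y z * (1 + y^2) end.
Fixpoint D2 (n : nat) (x y z : R) : R :=
  match n with O => 0 | S k => rho k z + D1 k y z * (y + x) + D2 k x y z * (1 + x^2) end.

Lemma rho_pow n t : rho n t = (1 + t^2)^n.
Proof. induction n; simpl; [reflexivity| rewrite IHn; reflexivity]. Qed.

Lemma newton n x y z : rho n y = rho n z + (y - z) * D1 n y z /\
  rho n x = rho n z + (x - z) * D1 n y z + (x - z) * (x - y) * D2 n x y z.
Proof.
  induction n as [|k [H1 H2]].
  - cbn [rho D1 D2]; split; ring.
  - cbn [rho D1 D2]. split.
    + rewrite H1; ring.
    + rewrite H2; ring.
Qed.

Lemma rho_bound n t m : 1 <= m -> Rabs t <= m -> 0 <= rho n t <= 2^n * m^(2*n).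
Proof.
  intros Hm Ht. induction n as [|k IH].
  - simpl; lra.
  - replace (2 * S k)%nat with (2 * k + 2)%nat by lia. rewrite pow_add.
    cbn [rho pow].
    assert (Ht2 : t^2 <= m^2).
    { rewrite <- (pow2_abs t). apply pow_incr. split; [apply Rabs_pos|lra]. }
    assert (0 <= m^(2*k)) by (apply pow_le; lra).
    assert (1 <= m^2) by nra.
    destruct IH as [IH1 IH2].
    split. { assert (0 <= t^2) by nra. nra. }
    assert (0 <= 1 + t^2 <= 2 * m^2) by nra.
    assert ((1 + t^2) * rho k t <= (2 * m^2) * (2^k * m^(2*k))).
    { apply Rmult_le_compat; lra. }
    nra.
Qed.

Lemma D_bounds n : exists al be, 0 <= al /\ 0 <= be /\
  forall x y z m, 1 <= m -> Rabs x <= m -> Rabs y <= m -> Rabs z <= m ->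
  Rabs (D1 n y z) * m <= al * m^(2*n) /\ Rabs (D2 n x y z) * m^2 <= be * m^(2*n).
Proof.
  induction n as [|k [al [be [Hal [Hbe IH]]]]].
  - exists 0, 0. split; [lra|split; [lra|]]. intros. simpl. rewrite Rabs_R0. lra.
  - exists (2 * 2^k + 2 * al), (2^k + 2 * al + 2 * be).
    split. { assert (0 < 2^k) by (apply pow_lt; lra). lra. }
    split. { assert (0 < 2^k) by (apply pow_lt; lra). lra. }
    intros x y z m Hm Hx Hy Hz.
    destruct (IH x y z m Hm Hx Hy Hz) as [I1 I2].
    destruct (rho_bound k z m Hm Hz) as [R1 R2].
    replace (2 * S k)%nat with (2 * k + 2)%nat by lia. rewrite pow_add.
    cbn [D1 D2].
    assert (P : 0 <= m^(2*k)) by (apply pow_le; lra).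
    assert (Hx2 : x^2 <= m^2).
    { rewrite <- (pow2_abs x). apply pow_incr. split; [apply Rabs_pos|lra]. }
    assert (Hy2 : y^2 <= m^2).
    { rewrite <- (pow2_abs y). apply pow_incr. split; [apply Rabs_pos|lra]. }
    assert (Hzy : Rabs (z + y) <= 2 * m) by (eapply Rle_trans; [apply Rabs_triang|lra]).
    assert (Hyx : Rabs (y + x) <= 2 * m) by (eapply Rle_trans; [apply Rabs_triang|lra]).
    assert (Q1 : Rabs (1 + y^2) <= 2 * m^2).
    { rewrite Rabs_pos_eq; nra. }
    assert (Q2 : Rabs (1 + x^2) <= 2 * m^2).
    { rewrite Rabs_pos_eq; nra. }
    assert (A0 : 0 <= Rabs (D1 k y z)) by apply Rabs_pos.
    assert (B0 : 0 <= Rabs (D2 k x y z)) by apply Rabs_pos.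
    assert (Rabs (rho k z) = rho k z) by (apply Rabs_pos_eq; lra).
    split.
    + eapply Rle_trans.
      { apply Rmult_le_compat_r; [lra|]. eapply Rle_trans; [apply Rabs_triang|].
        rewrite !Rabs_mult. apply Rle_refl. }
      assert (E1 : rho k z * Rabs (z + y) * m <= (2^k * m^(2*k)) * (2 * m) * m).
      { apply Rmult_le_compat_r; [lra|]. apply Rmult_le_compat; try lra; apply Rabs_pos. }
      assert (E2 : Rabs (D1 k y z) * m * Rabs (1 + y^2) <= (al * m^(2*k)) * (2 * m^2)).
      { apply Rmult_le_compat.
        - apply Rmult_le_pos; [apply Rabs_pos|lra].
        - apply Rabs_pos.
        - exact I1.
        - exact Q1. }
      rewrite H. nra.
    + eapply Rle_trans.
      { apply Rmult_le_compat_r; [nra|]. eapply Rle_trans; [apply Rabs_triang|].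
        apply Rplus_le_compat_r. eapply Rle_trans; [apply Rabs_triang|].
        rewrite !Rabs_mult. apply Rle_refl. }
      assert (E2 : Rabs (D1 k y z) * m * (Rabs (y + x) * m) <= (al * m^(2*k)) * (2 * m * m)).
      { apply Rmult_le_compat.
        - apply Rmult_le_pos; lra.
        - apply Rmult_le_pos; [apply Rabs_pos|lra].
        - exact I1.
        - apply Rmult_le_compat_r; lra. }
      assert (E3 : Rabs (D2 k x y z) * m^2 * Rabs (1 + x^2) <= (be * m^(2*k)) * (2 * m^2)).
      { apply Rmult_le_compat.
        - apply Rmult_le_pos; [apply Rabs_pos|nra].
        - apply Rabs_pos.
        - exact I2.
        - exact Q2. }
      assert (E1 : rho k z * m^2 <= (2^k * m^(2*k)) * m^2).
      { apply Rmult_le_compat_r; nra. }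
      rewrite H, Rabs_mult.
      replace ((rho k z + Rabs (D1 k y z) * Rabs (y + x) + Rabs (D2 k x y z) * Rabs (1 + x ^ 2)) * m ^ 2)
        with (rho k z * m^2 + Rabs (D1 k y z) * m * (Rabs (y + x) * m) + Rabs (D2 k x y z) * m^2 * Rabs (1 + x^2)) by ring.
      replace (al * m ^ (2 * k) * (2 * m * m)) with (al * m ^ (2 * k) * (2 * m^2)) in E2 by ring.
      lra.
Qed.

Definition F (n : nat) (x y : R) : R := x ^ (2 * n - 1) / (x^2 + y^2) ^ n.

Lemma rho_pos n t : 0 < rho n t.
Proof. rewrite rho_pow. apply pow_lt. nra. Qed.

Lemma rho_split n t : (1 <= n)%nat -> rho n t = (1 + t^2) * (1 + t^2)^(n-1).
Proof. intros. destruct n; [lia|]. simpl. rewrite rho_pow. replace (n-0)%nat with n by lia. reflexivity. Qed.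

Lemma F_rho n x y : (1 <= n)%nat -> x <> 0 -> F n x y = / (x * rho n (y/x)).
Proof.
  intros Hn Hx. unfold F. rewrite rho_pow.
  replace (x^2 + y^2) with (x^2 * (1 + (y/x)^2)) by (field; auto).
  rewrite Rpow_mult_distr, <- pow_mult.
  replace (x ^ (2 * n)) with (x * x ^ (2 * n - 1))
    by (rewrite tech_pow_Rmult; f_equal; lia).
  assert (x ^ (2*n-1) <> 0) by (apply pow_nonzero; auto).
  assert ((1 + (y/x)^2)^n <> 0) by (apply pow_nonzero; nra).
  field; auto.
Qed.

Lemma F_odd n x y : (1 <= n)%nat -> F n (-x) (-y) = - F n x y.
Proof.
  intros Hn. unfold F.
  replace ((-x)^2 + (-y)^2) with (x^2+y^2) by ring.
  replace (2 * n - 1)%nat with (S (2 * (n-1))) by lia.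
  rewrite <- !tech_pow_Rmult, !pow_mult.
  replace ((-x)^2) with (x^2) by ring. unfold Rdiv. ring.
Qed.

Lemma F_zero n y : (1 <= n)%nat -> F n 0 y = 0.
Proof. intros. unfold F. rewrite pow_i by lia. unfold Rdiv; ring. Qed.

Lemma Fdeg n x y z : (1 <= n)%nat -> 0 < x^2 + y^2 -> 0 < x^2 + z^2 ->
  F n x y * F n x z <= x^2 / ((x^2+y^2) * (x^2+z^2)).
Proof.
  intros Hn P R. unfold F.
  set (P1 := x^2+y^2) in *. set (R1 := x^2+z^2) in *.
  replace (2 * n - 1)%nat with (S (2 * (n-1))) by lia.
  replace (P1 ^ n) with (P1 * P1 ^ (n-1)) by (rewrite tech_pow_Rmult; f_equal; lia).
  replace (R1 ^ n) with (R1 * R1 ^ (n-1)) by (rewrite tech_pow_Rmult; f_equal; lia).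
  rewrite <- !tech_pow_Rmult, !pow_mult.
  assert (HP : 0 <= (x^2)^(n-1) <= P1^(n-1)) by (split; [apply pow_le; nra| apply pow_incr; unfold P1; nra]).
  assert (HR : 0 <= (x^2)^(n-1) <= R1^(n-1)) by (split; [apply pow_le; nra| apply pow_incr; unfold R1; nra]).
  assert (0 < P1^(n-1)) by (apply pow_lt; lra).
  assert (0 < R1^(n-1)) by (apply pow_lt; lra).
  replace (x * (x ^ 2) ^ (n - 1) / (P1 * P1 ^ (n - 1)) * (x * (x ^ 2) ^ (n - 1) / (R1 * R1 ^ (n - 1))))
    with (x^2 / (P1 * R1) * (((x^2)^(n-1) / P1^(n-1)) * ((x^2)^(n-1) / R1^(n-1)))) by (field; lra).
  apply Rle_trans with (x^2 / (P1*R1) * 1); [|lra].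
  apply Rmult_le_compat_l. { apply Rmult_le_pos. nra. left; apply Rinv_0_lt_compat; nra. }
  assert ((x^2)^(n-1) / P1^(n-1) <= 1) by (apply Rmult_le_reg_r with (P1^(n-1)); [lra|]; field_simplify; lra).
  assert ((x^2)^(n-1) / R1^(n-1) <= 1) by (apply Rmult_le_reg_r with (R1^(n-1)); [lra|]; field_simplify; lra).
  assert (0 <= (x^2)^(n-1) / P1^(n-1)) by (apply Rmult_le_pos; [lra| left; apply Rinv_0_lt_compat; lra]).
  assert (0 <= (x^2)^(n-1) / R1^(n-1)) by (apply Rmult_le_pos; [lra| left; apply Rinv_0_lt_compat; lra]).
  nra.
Qed.

Lemma F_y n x y : F n x (-y) = F n x y.
Proof. unfold F. replace ((-y)^2) with (y^2) by ring. reflexivity. Qed.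

Lemma sq_nz x y : x <> 0 -> x^2 + y^2 <> 0.
Proof. intros Hx. pose proof (Rsqr_pos_lt x Hx). unfold Rsqr in *. nra. Qed.

Lemma generic n be : (1 <= n)%nat -> 0 <= be ->
  (forall x y z m, 1 <= m -> Rabs x <= m -> Rabs y <= m -> Rabs z <= m ->
     Rabs (D2 n x y z) * m^2 <= be * m^(2*n)) ->
  forall a a' b b' c c', c = b - a -> c' = b' - a' -> a <> 0 -> b <> 0 -> c <> 0 ->
  F n a a' * F n b b' - F n a a' * F n c c' + F n b b' * F n c c'
   <= be * ((a*b' - a'*b)^2 / ((a^2+a'^2)*(b^2+b'^2)*(c^2+c'^2))).
Proof.
  intros Hn Hbe HD a a' b b' c c' Hc Hc' Ha Hb Hc0.
  rewrite (F_rho n a a'), (F_rho n b b'), (F_rho n c c') by auto.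
  destruct (newton n (a'/a) (c'/c) (b'/b)) as [Hy Hx].
  pose proof (rho_pos n (a'/a)). pose proof (rho_pos n (c'/c)). pose proof (rho_pos n (b'/b)).
  assert (HN : a * rho n (a'/a) + c * rho n (c'/c) - b * rho n (b'/b)
     = a * c / b * (a'/a - c'/c)^2 * D2 n (a'/a) (c'/c) (b'/b)).
  { rewrite Hx, Hy. subst c c'. field. auto. }
  set (s1 := a'/a) in *. set (s2 := c'/c) in *. set (s3 := b'/b) in *.
  set (B := D2 n s1 s2 s3) in *.
  rewrite (rho_split n s1), (rho_split n s2), (rho_split n s3) in * by auto.
  set (q1 := 1 + s1^2) in *. set (q2 := 1 + s2^2) in *. set (q3 := 1 + s3^2) in *.
  assert (Q1 : 1 <= q1) by (unfold q1; nra).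
  assert (Q2 : 1 <= q2) by (unfold q2; nra).
  assert (Q3 : 1 <= q3) by (unfold q3; nra).
  set (Q := q1 * q2 * q3).
  assert (1 <= q1 * q2) by nra. assert (HQ : 1 <= Q) by (unfold Q; nra).
  assert (P1 : 0 < q1^(n-1)) by (apply pow_lt; lra).
  assert (P2 : 0 < q2^(n-1)) by (apply pow_lt; lra).
  assert (P3 : 0 < q3^(n-1)) by (apply pow_lt; lra).
  assert (HB : B <= be * Q^(n-1)).
  { set (m := sqrt Q).
    assert (Hm2 : m^2 = Q) by (apply pow2_sqrt; lra).
    assert (Hm : 1 <= m).
    { unfold m. rewrite <- sqrt_1. apply sqrt_le_1_alt. lra. }
    assert (Habs : forall s, s^2 <= Q -> Rabs s <= m).
    { intros s Hs. unfold m. rewrite <- (sqrt_pow2 (Rabs s)) by apply Rabs_pos. rewrite pow2_abs.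
      apply sqrt_le_1_alt. lra. }
    assert (Hs1 : s1^2 <= Q) by (unfold Q, q1 in *; nra).
    assert (Hs2 : s2^2 <= Q) by (unfold Q, q2 in *; nra).
    assert (Hs3 : s3^2 <= Q) by (unfold Q, q3 in *; nra).
    specialize (HD s1 s2 s3 m Hm (Habs _ Hs1) (Habs _ Hs2) (Habs _ Hs3)).
    fold B in HD. rewrite pow_mult, Hm2 in HD.
    replace (Q^n) with (Q * Q^(n-1)) in HD by (rewrite tech_pow_Rmult; f_equal; lia).
    assert (Rabs B <= be * Q^(n-1)).
    { apply Rmult_le_reg_r with Q; [lra|]. lra. }
    pose proof (Rle_abs B). lra. }
  assert (HQn : Q^(n-1) = q1^(n-1) * q2^(n-1) * q3^(n-1)) by (unfold Q; rewrite !Rpow_mult_distr; ring).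
  assert (EL : / (a * (q1 * q1 ^ (n - 1))) * / (b * (q3 * q3 ^ (n - 1))) -
     / (a * (q1 * q1 ^ (n - 1))) * / (c * (q2 * q2 ^ (n - 1))) +
     / (b * (q3 * q3 ^ (n - 1))) * / (c * (q2 * q2 ^ (n - 1)))
     = (s1 - s2)^2 / (b^2 * Q) * (B / Q^(n-1))).
  { rewrite HQn.
    transitivity ((a * (q1 * q1 ^ (n - 1)) + c * (q2 * q2 ^ (n - 1)) - b * (q3 * q3 ^ (n - 1)))
       / (a * b * c * (q1 * q1 ^ (n - 1)) * (q2 * q2 ^ (n - 1)) * (q3 * q3 ^ (n - 1)))).
    { field. repeat split; lra || auto. }
    rewrite HN. unfold Q. field. repeat split; lra || auto. }
  assert (ER : (a*b' - a'*b)^2 / ((a^2+a'^2)*(b^2+b'^2)*(c^2+c'^2)) = (s1 - s2)^2 / (b^2 * Q)).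
  { unfold Q, q1, q2, q3, s1, s2, s3. subst c c'. field. repeat split; auto; apply sq_nz; auto; lra. }
  rewrite EL, ER.
  assert (T : 0 <= (s1 - s2)^2 / (b^2 * Q)).
  { assert (0 < b^2) by (pose proof (Rsqr_pos_lt b Hb); unfold Rsqr in *; nra).
    apply Rmult_le_pos. apply pow2_ge_0. left. apply Rinv_0_lt_compat. nra. }
  assert (B / Q^(n-1) <= be).
  { assert (0 < Q^(n-1)) by (apply pow_lt; lra).
    apply Rmult_le_reg_r with (Q^(n-1)); [lra|]. unfold Rdiv. rewrite Rmult_assoc, Rinv_l by lra. lra. }
  nra.
Qed.

Lemma Gab n : (1 <= n)%nat -> exists C, 0 < C /\
  forall a a' b b' c c', c = b - a -> c' = b' - a' ->
  0 < a^2+a'^2 -> 0 < b^2+b'^2 -> 0 < c^2+c'^2 ->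
  F n a a' * F n b b' - F n a a' * F n c c' + F n b b' * F n c c'
   <= C * (4 * ((a*b' - a'*b)^2 / ((a^2+a'^2)*(b^2+b'^2)*(c^2+c'^2)))).
Proof.
  intros Hn. destruct (D_bounds n) as [al [be [Hal [Hbe HD]]]].
  exists (be + 1). split; [lra|].
  intros a a' b b' c c' Hc Hc' HU HV HW.
  assert (Hq : 0 <= (a*b' - a'*b)^2 / ((a^2+a'^2)*(b^2+b'^2)*(c^2+c'^2))).
  { apply Rmult_le_pos. apply pow2_ge_0. left. apply Rinv_0_lt_compat.
    apply Rmult_lt_0_compat; [apply Rmult_lt_0_compat|]; lra. }
  enough (F n a a' * F n b b' - F n a a' * F n c c' + F n b b' * F n c c'
           <= (be + 1) * ((a*b' - a'*b)^2 / ((a^2+a'^2)*(b^2+b'^2)*(c^2+c'^2)))) by nra.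
  destruct (Req_dec a 0) as [Ha|Ha].
  {
    subst a. rewrite F_zero by auto.
    rewrite Rminus_0_r in Hc. subst c.
    pose proof (Fdeg n b b' c' Hn HV HW).
    assert (a' <> 0) by (intro Hz; rewrite Hz in HU; simpl in HU; lra).
    assert (E : (0*b' - a'*b)^2/((0^2+a'^2)*(b^2+b'^2)*(b^2+c'^2)) = b^2/((b^2+b'^2)*(b^2+c'^2))).
    { field. repeat split; try lra. }
    rewrite E. rewrite E in Hq. nra. }
  destruct (Req_dec b 0) as [Hb|Hb].
  { subst b. rewrite F_zero by auto.
    replace (0 - a) with (-a) in Hc by ring. subst c.
    rewrite <- (F_y n (-a) c'), F_odd by auto.
    replace ((-a)^2) with (a^2) in * by ring.
    pose proof (Fdeg n a a' c' Hn HU HW).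
    assert (b' <> 0) by (intro Hz; rewrite Hz in HV; simpl in HV; lra).
    assert (E : (a*b' - a'*0)^2/((a^2+a'^2)*(0^2+b'^2)*(a^2+c'^2)) = a^2/((a^2+a'^2)*(a^2+c'^2))).
    { field. repeat split; try lra. }
    rewrite E. rewrite E in Hq. nra. }
  destruct (Req_dec c 0) as [Hc0|Hc0].
  { assert (Hba : b = a) by lra. subst b. clear Hc. subst c. rewrite F_zero by auto.
    pose proof (Fdeg n a a' b' Hn HU HV).
    assert (c' <> 0) by (intro Hz; rewrite Hz in HW; simpl in HW; lra).
    assert (E : (a*b' - a'*a)^2/((a^2+a'^2)*(a^2+b'^2)*(0^2+c'^2)) = a^2/((a^2+a'^2)*(a^2+b'^2))).
    { try rewrite Hc'. field. repeat split; try lra. all: try (rewrite <- Hc'; auto). }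
    rewrite E. rewrite E in Hq. nra. }
  assert (Hg := generic n be Hn Hbe (fun x y z m h1 h2 h3 h4 => proj2 (HD x y z m h1 h2 h3 h4))
                  a a' b b' c c' Hc Hc' Ha Hb Hc0).
  nra.
Qed.

Lemma menger_sq x1 y1 x2 y2 x3 y3 :
  0 < (x2-x1)^2 + (y2-y1)^2 -> 0 < (x3-x1)^2 + (y3-y1)^2 -> 0 < (x3-x2)^2 + (y3-y2)^2 ->
  menger (x1,y1) (x2,y2) (x3,y3) ^ 2 =
  4 * (((x2-x1)*(y3-y1) - (y2-y1)*(x3-x1))^2 /
       (((x2-x1)^2 + (y2-y1)^2) * ((x3-x1)^2 + (y3-y1)^2) * ((x3-x2)^2 + (y3-y2)^2))).
Proof.
  intros HU HV HW. unfold menger.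
  destruct (excluded_middle_informative (collinear (x1,y1) (x2,y2) (x3,y3))) as [Hc|Hc];
    unfold collinear in Hc; simpl in Hc.
  - rewrite Hc. unfold Rdiv. ring.
  - set (a := x2 - x1) in *. set (a' := y2 - y1) in *. set (b := x3 - x1) in *. set (b' := y3 - y1) in *.
    set (D := a * b' - a' * b) in *.
    set (U := a^2 + a'^2) in *. set (V := b^2 + b'^2) in *.
    set (W := (x3-x2)^2 + (y3-y2)^2) in *.
    assert (HWe : W = (b-a)^2 + (b'-a')^2) by (unfold W, a, b, a', b'; ring).
    assert (Hex : exists r, is_circumradius (x1,y1) (x2,y2) (x3,y3) r).
    { set (q1 := (b' * U - a' * V) / (2 * D)). set (q2 := (a * V - b * U) / (2 * D)).
      assert (Hq : q1^2 + q2^2 = U * V * W / (4 * D^2)).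
      { unfold q1, q2. rewrite HWe. unfold U, V. field. auto. }
      assert (Hpos : 0 < q1^2 + q2^2).
      { rewrite Hq. apply Rmult_lt_0_compat. apply Rmult_lt_0_compat; [apply Rmult_lt_0_compat|]; lra.
        apply Rinv_0_lt_compat. pose proof (Rsqr_pos_lt D Hc). unfold Rsqr in *. nra. }
      exists (sqrt (q1^2 + q2^2)). split. { apply sqrt_lt_R0. lra. }
      exists (x1 + q1, y1 + q2). unfold dist2, nrm2, psub; simpl.
      split; [|split]; f_equal.
      + ring.
      + replace (x2 - (x1 + q1)) with (a - q1) by (unfold a; ring).
        replace (y2 - (y1 + q2)) with (a' - q2) by (unfold a'; ring).
        unfold q1, q2, U, V, D. field. exact Hc.
      + replace (x3 - (x1 + q1)) with (b - q1) by (unfold b; ring).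
        replace (y3 - (y1 + q2)) with (b' - q2) by (unfold b'; ring).
        unfold q1, q2, U, V, D. field. exact Hc. }
    pose proof (epsilon_spec (inhabits 0) _ Hex) as Hs. fold (circumradius (x1,y1) (x2,y2) (x3,y3)) in Hs.
    set (r := circumradius (x1,y1) (x2,y2) (x3,y3)) in *.
    destruct Hs as [Hr [[wx wy] [E1 [E2 E3]]]].
    unfold dist2, nrm2, psub in E1, E2, E3; cbn [fst snd] in E1, E2, E3.
    assert (F1 : (x1 - wx)^2 + (y1 - wy)^2 = r^2). { rewrite <- E1. rewrite pow2_sqrt. reflexivity. apply Rplus_le_le_0_compat; apply pow2_ge_0. }
    assert (F2 : (x2 - wx)^2 + (y2 - wy)^2 = r^2) by (rewrite <- E2, pow2_sqrt; [reflexivity| apply Rplus_le_le_0_compat; apply pow2_ge_0]).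
    assert (F3 : (x3 - wx)^2 + (y3 - wy)^2 = r^2) by (rewrite <- E3, pow2_sqrt; [reflexivity| apply Rplus_le_le_0_compat; apply pow2_ge_0]).
    set (q1 := wx - x1). set (q2 := wy - y1).
    assert (L1 : 2 * (a * q1 + a' * q2) = U).
    { assert (U - 2 * (a * q1 + a' * q2) = (x2 - wx)^2 + (y2 - wy)^2 - ((x1 - wx)^2 + (y1 - wy)^2))
        by (unfold U, a, a', q1, q2; ring). lra. }
    assert (L2 : 2 * (b * q1 + b' * q2) = V).
    { assert (V - 2 * (b * q1 + b' * q2) = (x3 - wx)^2 + (y3 - wy)^2 - ((x1 - wx)^2 + (y1 - wy)^2))
        by (unfold V, b, b', q1, q2; ring). lra. }
    assert (R2 : q1^2 + q2^2 = r^2) by (rewrite <- F1; unfold q1, q2; ring).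
    assert (M1 : 2 * D * q1 = b' * U - a' * V).
    { rewrite <- L1, <- L2. unfold D. ring. }
    assert (M2 : 2 * D * q2 = a * V - b * U).
    { rewrite <- L1, <- L2. unfold D. ring. }
    assert (K : 4 * D^2 * r^2 = U * V * W).
    { rewrite <- R2. replace (4 * D^2 * (q1^2 + q2^2)) with ((2*D*q1)^2 + (2*D*q2)^2) by ring.
      rewrite M1, M2, HWe. unfold U, V. ring. }
    assert (r <> 0) by lra.
    assert (D^2 <> 0) by (apply pow_nonzero; exact Hc).
    assert (Hr2 : r^2 = U * V * W / (4 * D^2)) by (rewrite <- K; field; auto).
    rewrite pow_inv, Hr2. field. repeat split; try lra; auto.
Qed.

Lemma K1 n z w : K n 1 (psub z w) = F n (fst z - fst w) (snd z - snd w).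
Proof. reflexivity. Qed.

Lemma K2 n z w : K n 2 (psub z w) = F n (snd z - snd w) (fst z - fst w).
Proof. unfold K, F, coord, nrm2, psub. cbn [Nat.eqb fst snd]. rewrite (Rplus_comm (_ ^ 2)). reflexivity. Qed.

Lemma F_sw n x1 x2 y1 y2 : (1 <= n)%nat -> F n (x1 - x2) (y1 - y2) = - F n (x2 - x1) (y2 - y1).
Proof.
  intros. replace (x1 - x2) with (-(x2-x1)) by ring. replace (y1 - y2) with (-(y2-y1)) by ring.
  apply F_odd; auto.
Qed.

Lemma pos_neq x1 y1 x2 y2 : (x1, y1) <> (x2, y2) -> 0 < (x2-x1)^2 + (y2-y1)^2.
Proof.
  intros H. pose proof (pow2_ge_0 (x2-x1)). pose proof (pow2_ge_0 (y2-y1)).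
  destruct (Req_dec x1 x2).
  - subst. destruct (Req_dec y1 y2). subst; congruence.
    assert (y2 - y1 <> 0) by lra. pose proof (Rsqr_pos_lt _ H3). unfold Rsqr in *.
    replace ((y2-y1)^2) with ((y2-y1)*(y2-y1)) by ring. lra.
  - assert (x2 - x1 <> 0) by lra. pose proof (Rsqr_pos_lt _ H3). unfold Rsqr in *.
    replace ((x2-x1)^2) with ((x2-x1)*(x2-x1)) by ring. lra.
Qed.

Theorem lemma2p2 : forall n : nat, (1 <= n)%nat ->
  exists C : R, 0 < C /\
    forall (z1 z2 z3 : pt), z1 <> z2 -> z1 <> z3 -> z2 <> z3 ->
    forall i : nat, (i = 1 \/ i = 2)%nat ->
      p n i z1 z2 z3 <= C * (menger z1 z2 z3) ^ 2.
Proof.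
  intros n Hn. destruct (Gab n Hn) as [C [HC HG]]. exists C. split; auto.
  intros [x1 y1] [x2 y2] [x3 y3] H12 H13 H23 i Hi.
  pose proof (pos_neq _ _ _ _ H12) as HU.
  pose proof (pos_neq _ _ _ _ H13) as HV.
  pose proof (pos_neq _ _ _ _ H23) as HW.
  rewrite menger_sq by auto. unfold p.
  destruct Hi as [Hi|Hi]; subst i.
  - rewrite !K1. cbn [fst snd].
    rewrite (F_sw n x1 x2 y1 y2), (F_sw n x1 x3 y1 y3), (F_sw n x2 x3 y2 y3) by auto.
    specialize (HG (x2-x1) (y2-y1) (x3-x1) (y3-y1) (x3-x2) (y3-y2)
       ltac:(ring) ltac:(ring) HU HV HW).
    nra.
  - rewrite !K2. cbn [fst snd].
    rewrite (F_sw n y1 y2 x1 x2), (F_sw n y1 y3 x1 x3), (F_sw n y2 y3 x2 x3) by auto.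
    specialize (HG (y2-y1) (x2-x1) (y3-y1) (x3-x1) (y3-y2) (x3-x2)
       ltac:(ring) ltac:(ring) ltac:(rewrite Rplus_comm; exact HU)
       ltac:(rewrite Rplus_comm; exact HV) ltac:(rewrite Rplus_comm; exact HW)).
    replace ((y2 - y1) * (x3 - x1) - (x2 - x1) * (y3 - y1))
      with (- ((x2 - x1) * (y3 - y1) - (y2 - y1) * (x3 - x1))) in HG by ring.
    rewrite <- Rsqr_pow2, <- Rsqr_neg, Rsqr_pow2 in HG.
    rewrite (Rplus_comm ((y2-y1)^2)), (Rplus_comm ((y3-y1)^2)), (Rplus_comm ((y3-y2)^2)) in HG.
    nra.
Qed.
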